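(* For all $x,y\in\mathbb{B}^2$, $$|x-y|\le 2\,\operatorname{th}\frac{h_{\mathbb{B}^2}(x,y)}{4},$$ with equality when $x=-y$.
   Context: $\mathbb{B}^2$ is the open unit disk in $\mathbb{C}$; $\operatorname{th}$ is the hyperbolic tangent. For distinct $x,y\in\mathbb{B}^2$ the Hilbert metric is $h_{\mathbb{B}^2}(x,y)=\log\frac{|u-y||x-v|}{|u-x||y-v|}$, where $u,v$ are the intersection points of the line through $x,y$ with the unit circle, labelled so that $|u-x|<|u-y|$; also $h_{\mathbb{B}^2}(x,x)=0$. *)

(* Defs.v *)
From Stdlib Require Import Reals.
From Coquelicot Require Import Coquelicot.
Open Scope R_scope.

Definition in_disk (z : C) : Prop := Cmod z < 1.

(* The line through x and y (x <> y) is parametrized as x + t (y - x).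
   Its intersection with the unit circle |z| = 1 is given by the roots of
   a t^2 + b t + c = 0 with a = |y-x|^2, b = 2 Re(x * conj(y-x)),
   c = |x|^2 - 1.  For x, y in the disk, c < 0, so the roots satisfy
   t_u < 0 < 1 < t_v. *)
Definition hq_a (x y : C) : R := Cmod (y - x)%C ^ 2.
Definition hq_b (x y : C) : R :=
  2 * (fst x * fst (y - x)%C + snd x * snd (y - x)%C).
Definition hq_c (x : C) : R := Cmod x ^ 2 - 1.
Definition hq_disc (x y : C) : R := hq_b x y ^ 2 - 4 * hq_a x y * hq_c x.

Definition t_u (x y : C) : R := (- hq_b x y - sqrt (hq_disc x y)) / (2 * hq_a x y).
Definition t_v (x y : C) : R := (- hq_b x y + sqrt (hq_disc x y)) / (2 * hq_a x y).

(* u: the intersection point of the line with the unit circle on the side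
   of x (so |u - x| < |u - y|); v: the one on the side of y. *)
Definition end_u (x y : C) : C := (x + RtoC (t_u x y) * (y - x))%C.
Definition end_v (x y : C) : C := (x + RtoC (t_v x y) * (y - x))%C.

Definition hilbert_disk (x y : C) : R :=
  match Ceq_dec x y with
  | left _ => 0
  | right _ =>
      ln ((Cmod (end_u x y - y)%C * Cmod (x - end_v x y)%C) /
          (Cmod (end_u x y - x)%C * Cmod (y - end_v x y)%C))
  end.

(* Main.v *)
Require Import Defs.
From Stdlib Require Import Reals Lra Psatz.
From Coquelicot Require Import Coquelicot.
Open Scope R_scope.
Lemma key0 d al be : 0<d -> d<2 -> 0<al -> 0<be -> (al+be)*d <= 2-d ->
  (2+d)^2 * (al*be) <= (1+al)*(1+be)*(2-d)^2.
Proof.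
intros. 
assert (H4: 4*(al*be) <= (al+be)^2) by (pose proof (pow2_ge_0 (al-be)); nra).
assert (H5: d * (al+be)^2 <= (al+be) * (2-d)) by nra.
assert (H6: 2*d*(al+be)^2 <= (2-d)^2*(1+(al+be))).
{ assert ((2-d)^2 - (al+be)*(2-d)*d >= 0) by nra. nra. }
nra.
Qed.

Lemma key d T1 T2 : 0<d -> d<2 -> T1<0 -> 1<T2 -> (T2-T1)*d <= 2 ->
  (2+d)^2 * ((-T1)*(T2-1)) <= (1-T1)*T2*(2-d)^2.
Proof.
intros. pose proof (key0 d (-T1) (T2-1)).
replace ((1-T1)*T2) with ((1 + -T1)*(1+(T2-1))) by ring. apply H4; nra.
Qed.

Lemma roots a b c : 0 < a -> c < 0 -> b^2 <= 4*a*(c+1) -> a + b + c < 0 ->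
 (-b - sqrt (b^2 - 4*a*c))/(2*a) < 0 /\ 1 < (-b + sqrt (b^2 - 4*a*c))/(2*a) /\
 ((-b + sqrt (b^2 - 4*a*c))/(2*a) - (-b - sqrt (b^2 - 4*a*c))/(2*a)) * sqrt a <= 2.
Proof.
intros Ha Hc Hb Habc.
assert (Hd: 0 < b^2 - 4*a*c) by nra.
set (s := sqrt (b^2 - 4*a*c)).
assert (Hs0: 0 < s) by (apply sqrt_lt_R0; lra).
assert (Hs2: s^2 = b^2 - 4*a*c) by (unfold s; rewrite pow2_sqrt; lra).
assert (Hsb': -b < s /\ b < s) by (split; nra).
assert (Hqa: 0 < sqrt a) by (apply sqrt_lt_R0; lra).
assert (Hqa2: sqrt a ^2 = a) by (rewrite pow2_sqrt; lra).
split; [| split].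
- apply Rdiv_neg_pos; lra.
- apply Rlt_div_r; [lra|].
  destruct (Rle_lt_dec (2*a+b) 0). lra.
  assert (s^2 > (2*a+b)^2) by nra. nra.
- replace ((-b + s) / (2 * a) - (-b - s) / (2 * a)) with (s / a) by (field; lra).
  assert (s^2 <= 4*a) by nra.
  assert (s <= 2 * sqrt a) by nra.
  assert (E: s / a * sqrt a = s / sqrt a).
  { set (r := sqrt a) in *. rewrite <- Hqa2. field. lra. }
  rewrite E.
  apply Rle_div_l; lra.
Qed.

Lemma tanh_ln K : 0 < K -> exists Q, 0 < Q /\ Q^2 = K /\ tanh (ln K / 4) = (Q-1)/(Q+1).
Proof.
intros HK. set (q := exp (ln K / 4)).
assert (Hq: 0 < q) by apply exp_pos.
exists (q^2). split; [nra|split].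
- assert (exp (ln K) = q^4).
  { replace (ln K) with (ln K/4 + ln K/4 + ln K/4 + ln K/4) by field.
    rewrite !exp_plus. unfold q. ring. }
  rewrite exp_ln in H by auto. rewrite H. ring.
- assert (Hiq: 0 < /q) by (apply Rinv_0_lt_compat; auto).
  unfold tanh, sinh, cosh. rewrite exp_Ropp. fold q.
  assert (Hs: (q + /q)/2 <> 0) by (apply Rgt_not_eq; lra).
  assert (Hs2: q^2+1 <> 0) by (apply Rgt_not_eq; nra).
  assert (Hq0: q <> 0) by lra.
  field; auto.
Qed.

Lemma Cmod2 z : Cmod z ^ 2 = fst z ^ 2 + snd z ^ 2.
Proof. unfold Cmod. rewrite pow2_sqrt; [reflexivity|]. nra. Qed.

Lemma Cmod_scal k w z : z = (RtoC k * w)%C -> Cmod z = Rabs k * Cmod w.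
Proof. intros ->. rewrite Cmod_mult, Cmod_R. reflexivity. Qed.

Lemma coord (x y : C) : hq_a x y = (fst y - fst x)^2 + (snd y - snd x)^2 /\
  hq_b x y = 2*(fst x*(fst y - fst x) + snd x * (snd y - snd x)) /\
  hq_c x = fst x^2 + snd x^2 - 1.
Proof.
destruct x as [x1 x2], y as [y1 y2]. unfold hq_a, hq_b, hq_c.
rewrite !Cmod2. simpl. repeat split; ring.
Qed.

Ltac ceq := apply injective_projections; simpl; ring.

Theorem mainTheorem11 :
  forall x y : C, in_disk x -> in_disk y ->
    Cmod (x - y)%C <= 2 * tanh (hilbert_disk x y / 4) /\
    (x = Copp y -> Cmod (x - y)%C = 2 * tanh (hilbert_disk x y / 4)).
Proof.
intros x y Hx Hy. unfold in_disk in *.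
destruct (Ceq_dec x y) as [e|ne].
- subst. unfold hilbert_disk. destruct (Ceq_dec y y); [|congruence].
  assert (E: (y - y)%C = RtoC 0) by (destruct y; ceq).
  rewrite E, Cmod_0.
  replace (0/4) with 0 by field.
  assert (T: tanh 0 = 0) by (unfold tanh, sinh; rewrite Ropp_0, Rminus_diag; unfold Rdiv; ring).
  rewrite T. split; [lra | intros; ring].
- assert (Hxy : Cmod (x - y)%C = Cmod (y - x)%C).
  { rewrite (Cmod_scal (-1) (y - x)%C (x - y)%C) by (destruct x, y; ceq).
    assert (HR: Rabs (-1) = 1) by (rewrite Rabs_left; lra). rewrite HR; ring. }
  rewrite Hxy.
  set (d := Cmod (y - x)%C).
  assert (Hd0: 0 < d).
  { apply Cmod_gt_0. intro E. apply ne. destruct x as [x1 x2], y as [y1 y2].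
    injection E; intros. f_equal; lra. }
  assert (Hd2: d < 2).
  { assert (d <= Cmod y + Cmod x).
    { unfold d. rewrite <- (Cmod_opp x). apply Cmod_triangle. }
    lra. }
  destruct (coord x y) as (Ea & Eb & Ec).
  assert (Hx2 := Cmod2 x). assert (Hy2 := Cmod2 y).
  assert (Ead: hq_a x y = d^2) by reflexivity.
  destruct x as [x1 x2], y as [y1 y2]. simpl fst in *. simpl snd in *.
  assert (Hxn: 0 <= Cmod (x1,x2)) by apply Cmod_ge_0.
  assert (Hyn: 0 <= Cmod (y1,y2)) by apply Cmod_ge_0.
  assert (Hc: hq_c (x1,x2) < 0) by nra.
  assert (Hb: hq_b (x1,x2) (y1,y2) ^2 <= 4 * hq_a (x1,x2) (y1,y2) * (hq_c (x1,x2) + 1)).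
  { rewrite Ea, Eb, Ec. pose proof (pow2_ge_0 (x1*(y2-x2) - x2*(y1-x1))). nra. }
  assert (Habc: hq_a (x1,x2) (y1,y2) + hq_b (x1,x2) (y1,y2) + hq_c (x1,x2) < 0).
  { rewrite Ea, Eb, Ec. nra. }
  assert (Ha: 0 < hq_a (x1,x2) (y1,y2)) by nra.
  destruct (roots _ _ _ Ha Hc Hb Habc) as (H1 & H2 & H3).
  fold (hq_disc (x1,x2) (y1,y2)) in H1, H2, H3.
  fold (t_u (x1,x2) (y1,y2)) in H1, H3. fold (t_v (x1,x2) (y1,y2)) in H2, H3.
  rewrite Ead, sqrt_pow2 in H3 by lra.
  set (T1 := t_u (x1,x2) (y1,y2)) in *. set (T2 := t_v (x1,x2) (y1,y2)) in *.
  assert (HK: hilbert_disk (x1,x2) (y1,y2) = ln (((1-T1)*d*(T2*d))/((-T1)*d*((T2-1)*d)))).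
  { unfold hilbert_disk. destruct (Ceq_dec (x1,x2) (y1,y2)) as [e|_]; [contradiction|].
    f_equal. fold T1 T2.
    rewrite (Cmod_scal (T1 - 1) ((y1,y2) - (x1,x2))%C (end_u (x1, x2) (y1, y2) - (y1, y2))%C)
      by (unfold end_u; fold T1; ceq).
    rewrite (Cmod_scal (- T2) ((y1,y2) - (x1,x2))%C ((x1,x2) - end_v (x1, x2) (y1, y2))%C)
      by (unfold end_v; fold T2; ceq).
    rewrite (Cmod_scal T1 ((y1,y2) - (x1,x2))%C (end_u (x1, x2) (y1, y2) - (x1, x2))%C)
      by (unfold end_u; fold T1; ceq).
    rewrite (Cmod_scal (1 - T2) ((y1,y2) - (x1,x2))%C ((y1,y2) - end_v (x1, x2) (y1, y2))%C)
      by (unfold end_v; fold T2; ceq).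
    fold d.
    rewrite (Rabs_left (T1 - 1)) by lra. rewrite (Rabs_left (-T2)) by lra.
    rewrite (Rabs_left T1) by lra. rewrite (Rabs_left (1 - T2)) by lra.
    f_equal; ring. }
  rewrite HK.
  assert (HP: 0 < (-T1)*(T2-1)) by nra.
  assert (HKpos: 0 < ((1-T1)*d*(T2*d))/((-T1)*d*((T2-1)*d))).
  { apply Rdiv_lt_0_compat; nra. }
  destruct (tanh_ln _ HKpos) as (Q & HQ & HQ2 & HQt).
  rewrite HQt.
  assert (HQP: Q^2 * ((-T1)*(T2-1)) = (1-T1)*T2).
  { rewrite HQ2. field. split; nra. }
  pose proof (key d T1 T2 Hd0 Hd2 H1 H2 H3) as Hk.
  assert (Hsq: (2+d)^2 <= (Q*(2-d))^2).
  { apply (Rmult_le_reg_r ((-T1)*(T2-1))); [lra|].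
    replace ((Q*(2-d))^2 * ((-T1)*(T2-1))) with (Q^2 * ((-T1)*(T2-1)) * (2-d)^2) by ring.
    rewrite HQP. lra. }
  assert (Hz: 0 < Q*(2-d)) by (apply Rmult_lt_0_compat; lra).
  assert (Hlin: 2+d <= Q*(2-d)).
  { set (z := Q*(2-d)) in *. assert (0 < 2+d+z) by lra. nra. }
  split.
  + apply (Rmult_le_reg_r (Q+1)); [lra|].
    replace (2 * ((Q - 1) / (Q + 1)) * (Q + 1)) with (2*(Q-1)) by (field; lra). nra.
  + intro Hopp. injection Hopp. intros E2 E1.
    assert (Eb2: hq_b (x1,x2) (y1,y2) = - d^2) by (rewrite Eb, <- Ead, Ea, E1, E2; ring).
    assert (Ec2: hq_c (x1,x2) = d^2/4 - 1) by (rewrite Ec, <- Ead, Ea, E1, E2; field).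
    assert (Edisc: sqrt (hq_disc (x1,x2) (y1,y2)) = 2*d).
    { unfold hq_disc. rewrite Eb2, Ec2, Ead.
      replace ((- d ^ 2) ^ 2 - 4 * d ^ 2 * (d ^ 2 / 4 - 1)) with ((2*d)^2) by field.
      apply sqrt_pow2. lra. }
    assert (ET1: T1 = (d-2)/(2*d)).
    { unfold T1, t_u. rewrite Edisc, Eb2, Ead. field. lra. }
    assert (ET2: T2 = (d+2)/(2*d)).
    { unfold T2, t_v. rewrite Edisc, Eb2, Ead. field. lra. }
    assert (Heq: (2+d)^2 * ((-T1)*(T2-1)) = (1-T1)*T2*(2-d)^2).
    { rewrite ET1, ET2. field. lra. }
    assert (Hsq2: (2+d)^2 = (Q*(2-d))^2).
    { apply (Rmult_eq_reg_r ((-T1)*(T2-1))); [|lra].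
      replace ((Q*(2-d))^2 * ((-T1)*(T2-1))) with (Q^2 * ((-T1)*(T2-1)) * (2-d)^2) by ring.
      rewrite HQP. lra. }
    assert (Hl2: 2+d = Q*(2-d)).
    { set (z := Q*(2-d)) in *. assert (0 < 2+d+z) by lra.
      assert ((2+d-z)*(2+d+z) = 0) by nra.
      apply Rmult_integral in H0. destruct H0; lra. }
    field_simplify_eq; [|lra]. nra.
Qed.
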